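(* Let $R=\bigoplus_{s\in S}R_s$ be an $S$-graded ring inducing $S$ with $S$ cancellative. If $R$ is graded von Neumann regular, then $R$ is nearly epsilon-strongly graded.
   Context: Rings are associative, not necessarily unital. $S$-graded ring inducing $S$: $S$ a partial groupoid, $R=\bigoplus_{s\in S}R_s$, $R_sR_t\subseteq R_{st}$ when $st$ is defined, and $R_sR_t\neq0$ implies $st$ defined. Convention: $0\in S$, $R_0=0$, $S\setminus\{0\}=\{s:R_s\ne0\}$, undefined products set to $0$, $0$ absorbing. $H_R=\bigcup_sR_s$. $S$ is cancellative if $0\ne su=tu$ or $0\ne us=ut$ implies $s=t$. $I(S)$ is the set of idempotents of $S$. $S$ satisfies (LRI) if for every $s\in S$ there exist $s^{-1}\in S$ and $e,f\in I(S)$ with $es=sf=s$, $fs^{-1}=s^{-1}e=s^{-1}$, $ss^{-1}=e$, $s^{-1}s=f$ (these are unique when $S$ is cancellative). For $s,t$, $R_sR_t$ denotes the additive subgroup generated by products $ab$, $a\in R_s$, $b\in R_t$. $R$ (with $S$ cancellative) is nearly epsilon-strongly graded if $S$ satisfies (LRI) and for every $s\in S$ and $x\in R_s$ there exist $\epsilon(x)\in R_sR_{s^{-1}}$ and $\epsilon'(x)\in R_{s^{-1}}R_s$ with $\epsilon(x)x=x=x\epsilon'(x)$. $R$ is graded von Neumann regular if $x\in xRx$ for all $x\in H_R$. *)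

(* Defs.v *)
(* Non-unital associative rings: additive group (zmodType)
   with an explicit associative, biadditive multiplication. *)
From mathcomp Require Import all_boot all_algebra.
From Stdlib Require Import List.
Set Implicit Arguments. Unset Strict Implicit. Unset Printing Implicit Defensive.
Import GRing.Theory.
Local Open Scope ring_scope.

Definition is_rng (R : zmodType) (mul : R -> R -> R) : Prop :=
  [/\ forall x y z, mul x (mul y z) = mul (mul x y) z,
      forall x y z, mul (x + y) z = mul x z + mul y z &
      forall x y z, mul x (y + z) = mul x y + mul x z].

(* Partial groupoid S with the convention: an element z (playing 0) that is
   absorbing; undefined products are set to z. *)
Definition absorbing (S : Type) (op : S -> S -> S) (z : S) : Prop :=
  forall s, op z s = z /\ op s z = z.

Definition graded_inducing (R : zmodType) (mul : R -> R -> R)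
  (S : Type) (op : S -> S -> S) (z : S) (Rg : S -> R -> Prop) : Prop :=
      (forall s, Rg s 0 /\ (forall x y, Rg s x -> Rg s y -> Rg s (x - y))) /\
      (forall x, Rg z x -> x = 0) /\
      (forall x : R, exists (l : list S) (c : S -> R),
        NoDup l /\ (forall s, Rg s (c s)) /\ x = \sum_(s <- l) c s) /\
      (forall (l : list S) (c : S -> R), NoDup l ->
        (forall s, In s l -> Rg s (c s)) -> \sum_(s <- l) c s = 0 ->
        forall s, In s l -> c s = 0) /\
  (* R_s R_t included in R_{st}; with st := 0 when undefined and R_0 = 0, this
     also encodes "R_s R_t <> 0 implies st defined" *)
      (forall s t a b, Rg s a -> Rg t b -> Rg (op s t) (mul a b)) /\
      (forall s, s <> z <-> exists a, Rg s a /\ a <> 0).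

Definition cancellative (S : Type) (op : S -> S -> S) (z : S) : Prop :=
  (forall s t u, op s u <> z -> op s u = op t u -> s = t) /\
  (forall s t u, op u s <> z -> op u s = op u t -> s = t).

Definition idempotent (S : Type) (op : S -> S -> S) (e : S) : Prop := op e e = e.

Definition lri_inverse (S : Type) (op : S -> S -> S) (s s' : S) : Prop :=
  exists e f, [/\ idempotent op e, idempotent op f,
    op e s = s /\ op s f = s, op f s' = s' /\ op s' e = s' &
    op s s' = e /\ op s' s = f].

Definition LRI (S : Type) (op : S -> S -> S) : Prop :=
  forall s, exists s', lri_inverse op s s'.

(* x in R_s R_t : the additive subgroup generated by products ab, a in R_s, b in R_t
   (finite sums of such products, R_s being closed under negation) *)
Definition in_prod (R : zmodType) (mul : R -> R -> R) (Rg_s Rg_t : R -> Prop)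
  (x : R) : Prop :=
  exists l : list (R * R), (forall p, In p l -> Rg_s p.1 /\ Rg_t p.2) /\
    x = \sum_(p <- l) mul p.1 p.2.

Definition nearly_epsilon_strongly_graded (R : zmodType) (mul : R -> R -> R)
  (S : Type) (op : S -> S -> S) (Rg : S -> R -> Prop) : Prop :=
  LRI op /\
  forall s s', lri_inverse op s s' -> forall x, Rg s x ->
    exists eps eps', in_prod mul (Rg s) (Rg s') eps /\
      in_prod mul (Rg s') (Rg s) eps' /\ mul eps x = x /\ mul x eps' = x.

Definition graded_vN_regular (R : zmodType) (mul : R -> R -> R)
  (S : Type) (Rg : S -> R -> Prop) : Prop :=
  forall s x, Rg s x -> exists r, x = mul (mul x r) x.

(* Submission.v *)
Require Import Defs.
From Stdlib Require Import List Classical ClassicalEpsilon.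
From mathcomp Require Import all_boot all_algebra.
From HB Require Import structures.
Set Implicit Arguments. Unset Strict Implicit. Unset Printing Implicit Defensive.
Import GRing.Theory.
Local Open Scope ring_scope.

Definition cS (S : Type) : Type := S.
Definition ceq (S : Type) (x y : cS S) : bool :=
  if excluded_middle_informative (x = y) then true else false.
Lemma ceqP S : Equality.axiom (@ceq S).
Proof. move=> x y; rewrite /ceq; case: excluded_middle_informative => h; [left|right] => //. Qed.
HB.instance Definition _ (S : Type) := hasDecEq.Build (cS S) (@ceqP S).

Lemma In_mem (T : eqType) (x : T) (l : seq T) : In x l <-> x \in l.
Proof.
elim: l => [|y l IH] //=; rewrite in_cons; split.
- by case=> [->|/IH ->]; rewrite ?eqxx ?orbT.
- by case/orP=> [/eqP->|/IH]; [left|right].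
Qed.

Lemma uniq_NoDup (T : eqType) (l : seq T) : uniq l -> NoDup l.
Proof.
elim: l => [|y l IH] /=; first by constructor.
case/andP=> ny u; constructor; last exact: IH.
by move/In_mem; rewrite (negbTE ny).
Qed.


Lemma mul0l (R : zmodType) (mul : R -> R -> R) y : is_rng mul -> mul 0 y = 0.
Proof.
case=> _ dl _; by apply: (addrI (mul 0 y)); rewrite -dl !addr0.
Qed.

Lemma mul0r (R : zmodType) (mul : R -> R -> R) y : is_rng mul -> mul y 0 = 0.
Proof.
case=> _ _ dr; by apply: (addrI (mul y 0)); rewrite -dr !addr0.
Qed.

Lemma mulsuml (R : zmodType) (mul : R -> R -> R) (I : Type) (r : seq I) (P : pred I) F y :
  is_rng mul -> mul (\sum_(i <- r | P i) F i) y = \sum_(i <- r | P i) mul (F i) y.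
Proof.
move=> H; apply: (big_morph (fun u => mul u y)); last exact: mul0l.
by case: H => _ dl _ a b; rewrite dl.
Qed.

Lemma mulsumr (R : zmodType) (mul : R -> R -> R) (I : Type) (r : seq I) (P : pred I) F y :
  is_rng mul -> mul y (\sum_(i <- r | P i) F i) = \sum_(i <- r | P i) mul y (F i).
Proof.
move=> H; apply: (big_morph (fun u => mul y u)); last exact: mul0r.
by case: H => _ _ dr a b; rewrite dr.
Qed.

Lemma Rg_opp (R : zmodType) (S : Type) (Rg : S -> R -> Prop) :
  (forall s, Rg s 0 /\ (forall x y, Rg s x -> Rg s y -> Rg s (x - y))) ->
  forall u x, Rg u x -> Rg u (- x).
Proof. move=> H u x hx; rewrite -sub0r; case: (H u) => h0 hs; exact: hs. Qed.

Lemma Rg_add (R : zmodType) (S : Type) (Rg : S -> R -> Prop) :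
  (forall s, Rg s 0 /\ (forall x y, Rg s x -> Rg s y -> Rg s (x - y))) ->
  forall u x y, Rg u x -> Rg u y -> Rg u (x + y).
Proof.
move=> H u x y hx hy; rewrite -(opprK y); case: (H u) => h0 hs; apply: hs => //.
exact: Rg_opp.
Qed.

Lemma Rg_sum (R : zmodType) (S : Type) (Rg : S -> R -> Prop) :
  (forall s, Rg s 0 /\ (forall x y, Rg s x -> Rg s y -> Rg s (x - y))) ->
  forall u (I : Type) (r : seq I) (P : pred I) F,
  (forall i, P i -> Rg u (F i)) -> Rg u (\sum_(i <- r | P i) F i).
Proof.
move=> H u I r P F hF; apply: big_ind => //; first by case: (H u).
exact: Rg_add.
Qed.

Lemma L1 (R : zmodType) (mul : R -> R -> R) (S : Type) (op : S -> S -> S) (z : S)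
  (Rg : S -> R -> Prop) : graded_inducing mul op z Rg ->
  forall (l : seq (cS S * R)), (forall p, p \in l -> Rg p.1 p.2) ->
  \sum_(p <- l) p.2 = 0 ->
  forall u : cS S, \sum_(p <- l | p.1 == u) p.2 = 0.
Proof.
move=> [Hsub [Hz [Hdec [Hdir _]]]] l Hl Hs u.
pose U := undup (map fst l).
pose c := fun u : cS S => \sum_(p <- l | p.1 == u) p.2.
have Hc : forall v, Rg v (c v).
  move=> v; rewrite /c big_seq_cond; apply: Rg_sum => // p /andP[pin /eqP <-].
  exact: Hl.
have HU : \sum_(v <- U) c v = 0.
  rewrite /c /= (exchange_big_dep xpredT) //= -[RHS]Hs; apply: eq_big_seq => p pin.
  rewrite (eq_bigl (fun v => v == p.1)); last by move=> v; rewrite eq_sym.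
  rewrite big_const_seq count_uniq_mem ?undup_uniq //.
  by rewrite mem_undup map_f //= addr0.
have [uU|uU] := boolP (u \in U).
  have := Hdir U c; apply.
  - by apply: (@uniq_NoDup _ U); exact: undup_uniq.
  - by move=> v _; exact: Hc.
  - exact: HU.
  - by apply/(@In_mem _ u U).
rewrite big_seq_cond big1 // => p /andP[pin /eqP pu].
by move: uU; rewrite -pu mem_undup map_f.
Qed.

Lemma L2 (R : zmodType) (mul : R -> R -> R) (S : Type) (op : S -> S -> S) (z : S)
  (Rg : S -> R -> Prop) : graded_inducing mul op z Rg ->
  forall u v x, x <> 0 -> Rg u x -> Rg v x -> u = v.
Proof.
move=> HG u v x x0 hu hv; apply: NNPP => ne.
set l := [:: ((u : cS S), x); ((v : cS S), -x)].
have H1 : forall p, p \in l -> Rg p.1 p.2.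
  by move=> p; rewrite !inE => /orP[/eqP->|/eqP->] //=; apply: Rg_opp => //; case: HG.
have H2 : \sum_(p <- l) p.2 = 0 by rewrite !big_cons big_nil addr0 addrN.
have := L1 HG H1 H2 u.
rewrite !big_cons big_nil /= eqxx.
have -> : (v == u :> cS S) = false by apply/eqP => e; apply: ne.
by rewrite !addr0.
Qed.

Lemma G0 (R : zmodType) (mul : R -> R -> R) (S : Type) (op : S -> S -> S) (z : S)
  (Rg : S -> R -> Prop) : is_rng mul -> graded_inducing mul op z Rg ->
  forall s a r (l : seq (cS S)) (c : cS S -> R), Rg s a -> a = mul (mul a r) a ->
  (forall t, Rg t (c t)) -> r = \sum_(t <- l) c t ->
  a = \sum_(t <- l | op (op s t) s == s :> cS S) mul (mul a (c t)) a.
Proof.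
move=> Hr HG s a r l c Ha Har Hc Hrl.
have E1 : a = \sum_(t <- l) mul (mul a (c t)) a.
  by rewrite {1}Har Hrl (mulsumr _ _ _ _ Hr) (mulsuml _ _ _ _ Hr).
have Hmul := HG.2.2.2.2.1.
set L := ((s : cS S), a) :: [seq ((op (op s t) s : cS S), - mul (mul a (c t)) a) | t <- l].
have H1 : forall p, p \in L -> Rg p.1 p.2.
  move=> p; rewrite inE => /orP[/eqP->//|]. case/(@mapP (cS S) (Datatypes_prod__canonical__eqtype_Equality (Submission_cS__canonical__eqtype_Equality S) R)) => t tin -> /=.
  by apply: Rg_opp; [case: HG|apply: (Hmul); [apply: (Hmul)|]].
have H2 : \sum_(p <- L) p.2 = 0 by rewrite big_cons big_map /= sumrN -E1 subrr.
have := L1 HG H1 H2 s.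
rewrite big_cons /= eqxx big_map /= sumrN => /eqP; rewrite addr_eq0 opprK => /eqP; apply.
Qed.

Lemma G (R : zmodType) (mul : R -> R -> R) (S : Type) (op : S -> S -> S) (z : S)
  (Rg : S -> R -> Prop) : is_rng mul -> graded_inducing mul op z Rg ->
  cancellative op z ->
  forall s a r (l : seq (cS S)) (c : cS S -> R) (t0 : cS S), Rg s a -> a = mul (mul a r) a ->
  (forall t, Rg t (c t)) -> r = \sum_(t <- l) c t ->
  op (op s t0) s = s -> op s t0 <> z ->
  a = \sum_(t <- l | t == t0) mul (mul a (c t)) a.
Proof.
move=> Hr HG [cr cl] s a r l c t0 Ha Har Hc Hrl Ht0 Hst0.
have Hmul := HG.2.2.2.2.1.
have Hz := HG.2.1.
case: (classic (a = 0)) => [a0|a0].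
  by rewrite big1 // a0 => t _; rewrite mul0r.
have sz : s <> z by move=> e; apply: a0; apply: Hz; rewrite -e.
rewrite {1}(G0 Hr HG Ha Har Hc Hrl) [LHS]big_mkcond [RHS]big_mkcond.
apply: eq_bigr => t _.
case: (boolP (t == t0)) => [/eqP-> | ne]; first by rewrite Ht0 eqxx.
case: ifP => // /eqP P; apply: NNPP => nz.
have st : op s t <> z.
  move=> e; apply: nz.
  have -> : mul a (c t) = 0 by apply: Hz; rewrite -e; apply: (Hmul).
  exact: mul0l.
have e1 : op s t = op s t0 by apply: (cr _ _ s); rewrite ?P ?Ht0.
by move/eqP: ne; apply; apply: (cl _ _ s).
Qed.

Theorem proposition4p7 (R : zmodType) (mul : R -> R -> R)
  (S : Type) (op : S -> S -> S) (z : S) (Rg : S -> R -> Prop) :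
  is_rng mul -> absorbing op z -> graded_inducing mul op z Rg ->
  cancellative op z -> graded_vN_regular mul Rg ->
  nearly_epsilon_strongly_graded mul op Rg.
Proof.
move=> Hr Habs HG Hc Hvn.
have Hmul := HG.2.2.2.2.1. have Hz := HG.2.1. have Hnz := HG.2.2.2.2.2.
have Hdec := HG.2.2.1. have Hsub := HG.1.
case: (Hr) => As _ _.
have m0l : forall y, mul 0 y = 0 := fun y => mul0l y Hr.
have m0r : forall y, mul y 0 = 0 := fun y => mul0r y Hr.
split.
- move=> s; case: (classic (s = z)) => [->|sz].
    have zz : op z z = z := (Habs z).1.
    by exists z, z, z; split; rewrite /idempotent ?zz.
  have [a [Ha a0]] := (Hnz s).1 sz.
  have [r Har] := Hvn s a Ha.
  have [l [c [_ [Hcr Hrl]]]] := Hdec r.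
  have E := G0 Hr HG (l := l) (c := c) Ha Har Hcr Hrl.
  have [t0 [Pt0 Ft0]] : exists t0 : cS S, op (op s t0) s = s /\ mul (mul a (c t0)) a <> 0.
    apply: NNPP => hn; apply: a0; rewrite E big1 // => t /eqP Pt; apply: NNPP => Ft.
    by apply: hn; exists t.
  have st0 : op s t0 <> z.
    move=> e; apply: Ft0.
    have -> : mul a (c t0) = 0 by apply: Hz; rewrite -e; apply: (Hmul).
    exact: m0l.
  have E2 := G Hr HG Hc Ha Har Hcr Hrl Pt0 st0.
  pose b := \sum_(t <- (l : seq (cS S)) | t == t0) c t.
  have Hb : Rg t0 b by apply: Rg_sum => // t /eqP ->; exact: Hcr.
  have aba : a = mul (mul a b) a.
    by rewrite /b (mulsumr _ _ _ _ Hr) (mulsuml _ _ _ _ Hr) -E2.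
  pose b' := mul (mul b a) b.
  have h3 : mul (mul b a) (mul b a) = mul b a.
    by rewrite -(As b a (mul b a)) (As a b a) -aba.
  have h2 : mul b' a = mul b a by rewrite /b' -(As (mul b a) b a) h3.
  have h1 : mul a b' = mul a b by rewrite /b' (As a (mul b a) b) (As a b a) -aba.
  have ab'a : mul (mul a b') a = a by rewrite h1 -aba.
  have b'ab' : mul (mul b' a) b' = b'.
    by rewrite h2 /b' (As (mul b a) (mul b a) b) h3.
  have nab' : mul a b' <> 0 by move=> e; apply: a0; rewrite -ab'a e m0l.
  have nb'a : mul b' a <> 0 by move=> e; apply: a0; rewrite -ab'a -As e m0r.
  have nb' : b' <> 0 by move=> e; apply: a0; rewrite -ab'a e m0r m0l.
  have Hb' : Rg (op (op t0 s) t0) b' by apply: (Hmul); [apply: (Hmul)|].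
  set u := op (op t0 s) t0.
  have Hab' := Hmul _ _ _ _ Ha Hb'.
  have Hb'a := Hmul _ _ _ _ Hb' Ha.
  exists u, (op s u), (op u s); split.
  + have := Hmul _ _ _ _ Hab' Hab'.
    rewrite (As (mul a b') a b') ab'a => h.
    exact: (L2 HG nab' h Hab').
  + have := Hmul _ _ _ _ Hb'a Hb'a.
    rewrite (As (mul b' a) b' a) b'ab' => h.
    exact: (L2 HG nb'a h Hb'a).
  + split.
      have := Hmul _ _ _ _ Hab' Ha; rewrite ab'a => h; exact: (L2 HG a0 h Ha).
    have := Hmul _ _ _ _ Ha Hb'a; rewrite As ab'a => h; exact: (L2 HG a0 h Ha).
  + split.
      have := Hmul _ _ _ _ Hb'a Hb'; rewrite b'ab' => h; exact: (L2 HG nb' h Hb').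
    have := Hmul _ _ _ _ Hb' Hab'; rewrite As b'ab' => h; exact: (L2 HG nb' h Hb').
  + by split.
- move=> s s' [e [f [He Hf [Hes Hsf] [Hfs' Hs'e] [Hss' Hs's]]]] x Hx.
  case: (classic (x = 0)) => [x0|x0].
    exists 0, 0; split; [|split; [|split]].
    - by exists [::]; split => //; rewrite big_nil.
    - by exists [::]; split => //; rewrite big_nil.
    - by rewrite x0 m0l.
    - by rewrite x0 m0l.
  have sz : s <> z by move=> e0; apply: x0; apply: Hz; rewrite -e0.
  have [r Hxr] := Hvn s x Hx.
  have [l [c [_ [Hcr Hrl]]]] := Hdec r.
  have P0 : op (op s s') s = s by rewrite Hss' Hes.
  have st0 : op s s' <> z.
    rewrite Hss' => ez; apply: sz; rewrite -Hes ez; exact: (Habs s).1.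
  have E2 := G Hr HG Hc (l := l) (c := c) (t0 := s') Hx Hxr Hcr Hrl P0 st0.
  exists (\sum_(t <- l | t == s' :> cS S) mul x (c t)),
         (\sum_(t <- l | t == s' :> cS S) mul (c t) x).
  split; [|split; [|split]].
  + exists (map (fun t => (x, c t)) (filter (fun t : cS S => t == s') l)); split.
      move=> p /In_mem; case/(@mapP (cS S)) => t; rewrite mem_filter => /andP[/eqP -> _] -> /=.
      by split => //; exact: Hcr.
    by rewrite big_map big_filter.
  + exists (map (fun t => (c t, x)) (filter (fun t : cS S => t == s') l)); split.
      move=> p /In_mem; case/(@mapP (cS S)) => t; rewrite mem_filter => /andP[/eqP -> _] -> /=.
      by split => //; exact: Hcr.
    by rewrite big_map big_filter.
  + by rewrite (mulsuml _ _ _ _ Hr) -E2.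
  + rewrite (mulsumr _ _ _ _ Hr) [RHS]E2; apply: eq_bigr => t _; exact: As.
Qed.
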